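(* Let $f:\mathbb{R}^n\to\mathbb{R}$ be differentiable with $L_f$-Lipschitz continuous gradient, let $g:\mathbb{R}^n\to\mathbb{R}\cup\{+\infty\}$ be proper, lower semicontinuous, $\gamma_g$-prox-bounded and $\rho$-weakly convex, let $\varphi=f+g$ with $\operatorname{argmin}\varphi\neq\emptyset$. For the iterates generated by the PGCL algorithm described in the context: (i) $r^k\to0$ and $\sum_k\|r^k\|^2<\infty$, and $\omega((x^k))=\omega((\bar x^k))\subseteq\operatorname{fix}T_\gamma$; (ii) $(\varphi_\gamma(x^k))$ converges to a finite value $\varphi_\star$, and if $(x^k)$ is bounded then $(\varphi(\bar x^k))$ also converges to $\varphi_\star$.
   Context: $\omega(\cdot)$ denotes the set of limit points of a sequence; $\operatorname{fix}T_\gamma=\{x:x\in T_\gamma(x)\}$. $\gamma_g$-prox-bounded: $g+\frac1{2\gamma}\|\cdot\|^2$ bounded below for each $\gamma\in(0,\gamma_g)$; $\rho$-weakly convex: $g+\frac\rho2\|\cdot\|^2$ convex. $\operatorname{prox}_{\gamma g}(x)=\operatorname{argmin}_z\{g(z)+\frac1{2\gamma}\|z-x\|^2\}$, $T_\gamma(x)=\operatorname{prox}_{\gamma g}(x-\gamma\nabla f(x))$, $R_\gamma(x)=\gamma^{-1}(x-T_\gamma(x))$. Forward-backward envelope $\varphi_\gamma(x)=\inf_u\{f(x)+\langle\nabla f(x),u-x\rangle+g(u)+\frac1{2\gamma}\|u-x\|^2\}$. $\partial_C$: Clarke generalized Jacobian. PGCL: given $x^0$, $\gamma\in(0,\min\{1/L_f,\gamma_g\})$,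 $\sigma\in(0,\gamma\frac{1-\gamma L_f}{2})$, $\beta\in(0,1)$, $\mu\in(0,1)$; for $k=0,1,\dots$: select $\bar x^k\in T_\gamma(x^k)$, $r^k=\gamma^{-1}(x^k-\bar x^k)$; select $\bar r^k\in R_\gamma(\bar x^k)$, $Q_k\in I-\gamma\partial_C(\nabla f)(\bar x^k)$, $P_k\in\partial_C\operatorname{prox}_{\gamma g}(\bar x^k-\gamma\nabla f(\bar x^k))$; $B_k=\gamma^{-1}Q_k(I-P_kQ_k)$; stop if $\bar r^k=0$ and $\lambda_{\min}(B_k)\ge0$; select $d^k,s^k$ with $\langle Q_k\bar r^k,d^k\rangle\le0$, $\langle Q_k\bar r^k,s^k\rangle\le0$, and $\langle B_ks^k,s^k\rangle<0$ if $\lambda_{\min}(B_k)<0$, $=0$ otherwise; let $\tau_k$ be the largest element of $\{\beta^m:m\in\mathbb N\}$ such that $x^{k+1}=\bar x^k+\tau_k^2d^k+\tau_ks^k$ satisfies $\varphi_\gamma(x^{k+1})\le\varphi_\gamma(x^k)-\sigma\|r^k\|^2+\frac\mu2\tau_k^2\langle B_ks^k,s^k\rangle$. *)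

(* Defs.v *)
(* R^n is modelled as row vectors 'rV[R]_n
   over an arbitrary R : realType, with the EUCLIDEAN inner product / norm
   defined below (the library norm on matrices is the sup norm, which only
   matters for the topology, which is the same). *)
From HB Require Import structures.
From mathcomp Require Import all_boot all_order all_algebra.
From mathcomp Require Import all_classical all_reals all_analysis.
Set Implicit Arguments. Unset Strict Implicit. Unset Printing Implicit Defensive.
Import Order.TTheory GRing.Theory Num.Theory.
Import numFieldNormedType.Exports.
Local Open Scope classical_set_scope.
Local Open Scope ring_scope.

Section PGCL.
Variables (R : realType) (n : nat).
Local Notation V := 'rV[R]_n.
Local Notation M := 'M[R]_n.

Definition dotp (u v : V) : R := \sum_(i < n) u 0 i * v 0 i.
Definition enorm (u : V) : R := Num.sqrt (dotp u u).

(* action of a matrix A on a vector v (v viewed as a column): A v *)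
Definition mxapp (A : M) (v : V) : V := v *m A^T.

Definition grad (f : V -> R) (x : V) : V := \row_(i < n) ('d f x) (delta_mx 0 i).

(* Jacobian matrix of F : R^n -> R^n at y, so that mxapp (jac F y) v = 'd F y v *)
Definition jac (F : V -> V) (y : V) : M := (lin1_mx ('d F y))^T.

Definition mx_conv (S : set M) : set M :=
  [set A | exists (m : nat) (l : 'I_m -> R) (As : 'I_m -> M),
     (forall i, 0 <= l i) /\ \sum_(i < m) l i = 1 /\
     (forall i, S (As i)) /\ A = \sum_(i < m) l i *: As i].

Definition sv_diff_at (T : V -> set V) (y : V) (J : M) : Prop :=
  exists F : V -> V, (\forall z \near y, T z = [set F z]) /\
    differentiable F y /\ J = jac F y.

Definition clarke_jac (T : V -> set V) (x : V) : set M :=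
  mx_conv [set A | exists (xs : nat -> V) (Js : nat -> M),
     xs @ \oo --> x /\ (forall i, sv_diff_at T (xs i) (Js i)) /\ Js @ \oo --> A].

Definition clarke_jac_fun (F : V -> V) (x : V) : set M :=
  clarke_jac (fun y => [set F y]) x.

Definition lambda_min_neg (B : M) : Prop := exists a : R, eigenvalue B a /\ a < 0.

Definition proper_fun (g : V -> \bar R) : Prop :=
  (forall x, g x != -oo%E) /\ exists x, g x \is a fin_num.

Definition prox_bounded (g : V -> \bar R) (gg : \bar R) : Prop :=
  forall gam : R, 0 < gam -> (gam%:E < gg)%E ->
    exists c : R, forall x, (c%:E <= g x + (1 / (2 * gam) * dotp x x)%R%:E)%E.

Definition ext_convex (h : V -> \bar R) : Prop :=
  forall (x y : V) (t : R), 0 <= t <= 1 ->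
    (h (t *: x + (1 - t) *: y)%R <= t%:E * h x + (1 - t)%R%:E * h y)%E.

Definition weakly_convex (g : V -> \bar R) (rho : R) : Prop :=
  ext_convex (fun x => g x + (rho / 2 * dotp x x)%R%:E)%E.

Definition lipschitz_grad (f : V -> R) (Lf : R) : Prop :=
  forall x y, enorm (grad f x - grad f y) <= Lf * enorm (x - y).

Variables (f : V -> R) (g : V -> \bar R).

Definition phi (x : V) : \bar R := ((f x)%:E + g x)%E.

Definition prox (gam : R) (x : V) : set V :=
  [set z | forall u, (g z + (1 / (2 * gam) * dotp (z - x) (z - x))%R%:E
                      <= g u + (1 / (2 * gam) * dotp (u - x) (u - x))%R%:E)%E].

Definition Tg (gam : R) (x : V) : set V := prox gam (x - gam *: grad f x).

Definition Rg (gam : R) (x : V) : set V := [set gam^-1 *: (x - z) | z in Tg gam x].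

Definition fixT (gam : R) : set V := [set x | Tg gam x x].

Definition fbe (gam : R) (x : V) : \bar R :=
  ereal_inf [set ((f x + dotp (grad f x) (u - x))%R%:E + g u
                  + (1 / (2 * gam) * dotp (u - x) (u - x))%R%:E)%E | u in [set: V]].

Definition limpts (u : nat -> V) : set V :=
  [set p | exists s : nat -> nat, {homo s : a b / (a < b)%N} /\ (u \o s) @ \oo --> p].

(* The sequences (x^k), (xbar^k), (rbar^k), Q_k, P_k, d^k, s^k, tau_k are
   generated by PGCL with parameters gam, sigma, beta, mu (infinite run: the
   stopping test never fires). *)
Definition pgcl_run (gam sigma beta mu : R)
  (x xb rb d s : nat -> V) (Q P : nat -> M) (tau : nat -> R) : Prop :=
  forall k : nat,
  let r := gam^-1 *: (x k - xb k) in
  let B := gam^-1 *: (Q k *m (1%:M - P k *m Q k)) in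
  let ls (t : R) := (fbe gam (xb k + (t ^+ 2) *: d k + t *: s k)%R
        <= fbe gam (x k) - (sigma * dotp r r)%R%:E
           + (mu / 2 * t ^+ 2 * dotp (mxapp B (s k)) (s k))%R%:E)%E in
  Tg gam (x k) (xb k) /\ Rg gam (xb k) (rb k) /\
      (exists A, clarke_jac_fun (grad f) (xb k) A /\ Q k = 1%:M - gam *: A) /\
      clarke_jac (prox gam) (xb k - gam *: grad f (xb k)) (P k) /\
      not (rb k = 0 /\ not (lambda_min_neg B)) /\
      (dotp (mxapp (Q k) (rb k)) (d k) <= 0 /\ dotp (mxapp (Q k) (rb k)) (s k) <= 0) /\
      (lambda_min_neg B -> dotp (mxapp B (s k)) (s k) < 0) /\
      (not (lambda_min_neg B) -> dotp (mxapp B (s k)) (s k) = 0) /\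
      (exists m : nat, tau k = beta ^+ m /\ ls (tau k) /\
          forall m' : nat, ls (beta ^+ m') -> beta ^+ m' <= tau k) /\
      x k.+1 = xb k + (tau k ^+ 2) *: d k + tau k *: s k.

End PGCL.

(* Main.v *)
Require Import Defs.
From HB Require Import structures.
From mathcomp Require Import all_boot all_order all_algebra.
From mathcomp Require Import all_classical all_reals all_analysis.
From mathcomp Require Import ring lra.
Import Order.TTheory GRing.Theory Num.Theory.
Import numFieldNormedType.Exports.
Local Open Scope classical_set_scope.
Local Open Scope ring_scope.

Lemma dotpC {R : realType} {n : nat} (u v : 'rV[R]_n) : dotp u v = dotp v u.
Proof. by apply: eq_bigr => i _; rewrite mulrC. Qed.

Lemma dotpDl {R : realType} {n : nat} (u v w : 'rV[R]_n) :
  dotp (u + v) w = dotp u w + dotp v w.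
Proof. by rewrite /dotp -big_split; apply: eq_bigr => i _; rewrite mxE mulrDl. Qed.

Lemma dotpZl {R : realType} {n : nat} (a : R) (u w : 'rV[R]_n) :
  dotp (a *: u) w = a * dotp u w.
Proof. by rewrite /dotp mulr_sumr; apply: eq_bigr => i _; rewrite mxE mulrA. Qed.

Lemma dotpNl {R : realType} {n : nat} (u w : 'rV[R]_n) :
  dotp (- u) w = - dotp u w.
Proof. by rewrite -scaleN1r dotpZl mulN1r. Qed.

Lemma dotpBl {R : realType} {n : nat} (u v w : 'rV[R]_n) :
  dotp (u - v) w = dotp u w - dotp v w.
Proof. by rewrite dotpDl dotpNl. Qed.

Lemma dotpDr {R : realType} {n : nat} (u v w : 'rV[R]_n) :
  dotp w (u + v) = dotp w u + dotp w v.
Proof. by rewrite dotpC dotpDl !(dotpC w). Qed.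

Lemma dotpZr {R : realType} {n : nat} (a : R) (u w : 'rV[R]_n) :
  dotp w (a *: u) = a * dotp w u.
Proof. by rewrite dotpC dotpZl dotpC. Qed.

Lemma dotpNr {R : realType} {n : nat} (u w : 'rV[R]_n) :
  dotp w (- u) = - dotp w u.
Proof. by rewrite dotpC dotpNl dotpC. Qed.

Lemma dotpBr {R : realType} {n : nat} (u v w : 'rV[R]_n) :
  dotp w (u - v) = dotp w u - dotp w v.
Proof. by rewrite dotpDr dotpNr. Qed.

Lemma dotp0l {R : realType} {n : nat} (w : 'rV[R]_n) : dotp 0 w = 0.
Proof. by rewrite /dotp big1 // => i _; rewrite mxE mul0r. Qed.

Lemma dotp0r {R : realType} {n : nat} (w : 'rV[R]_n) : dotp w 0 = 0.
Proof. by rewrite dotpC dotp0l. Qed.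

Lemma dotp_ge0 {R : realType} {n : nat} (u : 'rV[R]_n) : 0 <= dotp u u.
Proof. by apply: sumr_ge0 => i _; rewrite -expr2 sqr_ge0. Qed.

Lemma dotp_eq0 {R : realType} {n : nat} (u : 'rV[R]_n) : dotp u u = 0 -> u = 0.
Proof.
move=> /eqP; rewrite psumr_eq0; last by move=> i _; rewrite -expr2 sqr_ge0.
move=> /allP H; apply/rowP => i; rewrite mxE.
have := H i (mem_index_enum i); rewrite -expr2 sqrf_eq0 => /eqP //.
Qed.

Lemma entry_le_dotp {R : realType} {n : nat} (u : 'rV[R]_n) (i : 'I_n) :
  u 0 i ^+ 2 <= dotp u u.
Proof.
rewrite /dotp (bigD1 i) //= -expr2 lerDl; apply: sumr_ge0 => j _.
by rewrite -expr2 sqr_ge0.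
Qed.

Lemma dotp_le_norm {R : realType} {n : nat} (u : 'rV[R]_n) :
  dotp u u <= n%:R * `|u| ^+ 2.
Proof.
apply: (@le_trans _ _ (\sum_(i < n) `|u| ^+ 2)); last first.
  by rewrite sumr_const card_ord mulr_natl.
apply: ler_sum => i _.
rewrite -expr2 -real_normK ?num_real // lerXn2r ?nnegrE ?normr_ge0 //.
rewrite [`|u|]mx_normrE.
exact: (le_bigmax _ (fun ij : 'I_1 * 'I_n => `|u ij.1 ij.2|) (0, i)).
Qed.

Lemma norm_le_dotp {R : realType} {n : nat} (u : 'rV[R]_n) :
  `|u| ^+ 2 <= dotp u u.
Proof.
rewrite [`|u|]mx_normrE.
elim/big_ind: _ => //.
- by rewrite expr0n /= dotp_ge0.
- move=> a b Ha Hb; rewrite /Num.max; case: ifP => //.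
- move=> [i j] _ /=; rewrite real_normK ?num_real //.
  by rewrite (ord1 i); exact: entry_le_dotp.
Qed.

Lemma enorm_sqr {R : realType} {n : nat} (u : 'rV[R]_n) : enorm u ^+ 2 = dotp u u.
Proof. by rewrite /enorm sqr_sqrtr // dotp_ge0. Qed.

Lemma enorm_ge0 {R : realType} {n : nat} (u : 'rV[R]_n) : 0 <= enorm u.
Proof. exact: sqrtr_ge0. Qed.

Lemma enormZ {R : realType} {n : nat} (a : R) (u : 'rV[R]_n) :
  enorm (a *: u) = `|a| * enorm u.
Proof.
by rewrite /enorm dotpZl dotpZr mulrA -expr2 sqrtrM ?sqr_ge0 // sqrtr_sqr.
Qed.

Lemma cauchy_schwarz {R : realType} {n : nat} (u v : 'rV[R]_n) :
  dotp u v <= enorm u * enorm v.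
Proof.
set a := dotp u u; set b := dotp v v; set c := dotp u v.
have a0 : 0 <= a := dotp_ge0 u. have b0 : 0 <= b := dotp_ge0 v.
suff H : c ^+ 2 <= a * b.
  apply: (le_trans (ler_norm c)).
  by rewrite /enorm -sqrtrM // -sqrtr_sqr ler_sqrt // mulr_ge0.
have [b00|bpos] := eqVneq b 0.
  have v0 : v = 0 by apply: dotp_eq0.
  by rewrite /c v0 dotp0r expr0n /= mulr_ge0.
have bp : 0 < b by rewrite lt_def bpos b0.
have := dotp_ge0 (b *: u - c *: v).
rewrite !(dotpBl, dotpBr, dotpZl, dotpZr) -/a -/b -/c (dotpC v u) -/c => H.
have : 0 <= b * (a * b - c ^+ 2).
  by apply: (le_trans H); rewrite le_eqVlt; apply/orP; left; apply/eqP; rewrite /b; ring.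
by rewrite pmulr_rge0 // subr_ge0.
Qed.

Lemma diff_grad {R : realType} {n : nat} (f : 'rV[R]_n -> R) (z v : 'rV[R]_n) :
  'd f z v = dotp (grad f z) v.
Proof.
rewrite {1}(row_sum_delta v) linear_sum /dotp; apply: eq_bigr => i _.
by rewrite linearZ /= /grad mxE mulrC.
Qed.

Lemma phi_derive {R : realType} {n : nat} (f : 'rV[R]_n -> R) (x v : 'rV[R]_n) (t : R) :
  (forall y, differentiable f y) ->
  is_derive t (1:R) (fun s : R => f (s *: v + x)) (dotp (grad f (t *: v + x)) v).
Proof.
move=> df.
have dp : forall s : R, is_diff s (fun s : R => s *: v + x) (( *:%R ^~ v) + 0).
  move=> s. have -> : (fun s : R => s *: v + x) = ( *:%R ^~ v) + cst x by [].
  exact: is_diffD.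
have dphi : differentiable (f \o (fun s : R => s *: v + x)) t.
  apply: differentiable_comp => //.
apply: DeriveDef; first exact: diff_derivable.
rewrite deriveE // diff_comp //= derive.diff_val /= addr0 scale1r.
exact: diff_grad.
Qed.

Lemma descent_aux {R : realType} (phi dphi : R -> R) (c K : R) :
  (forall t : R, is_derive t (1:R) phi (dphi t)) ->
  (forall t : R, 0 < t < 1 -> dphi t - c <= 2 * K * t) ->
  phi 1 - phi 0 - c <= K.
Proof.
move=> H Hd.
pose h := (phi - ( *%R ^~ c) - (fun s => K * s ^+ 2)).
have Hh : forall t : R, is_derive t (1:R) h (dphi t - c - K * (2 * t)).
  move=> t; apply: is_derive_eq.
  by rewrite scaler0 add0r [c%:A]mulr1 [t%:A]mulr1 -[K *: _]/(K * _); ring.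
have d1 : forall t, t \in `]0, 1[ -> derivable h t (1:R).
  move=> t _; have := Hh t; case. done.
have d2 : forall t, t \in `]0, 1[ -> derive1 h t <= 0.
  move=> t; rewrite in_itv /= => Ht.
  rewrite derive1E (@derive_val _ _ _ _ _ _ _ (Hh t)).
  have := Hd t Ht; lra.
have d3 : {within `[0, 1], continuous h}.
  apply: derivable_within_continuous => t _; have := Hh t; case. done.
have : h 1 <= h 0.
  apply: (@ler0_derive1_le_cc _ h 0 1 d1 d2 d3).
  - by rewrite in_itv /= lexx ler01.
  - by rewrite in_itv /= lexx ler01.
  - exact: ler01.
rewrite /h /=; rewrite !fctE expr1n expr0n /= mulr0 mulr1 mul0r; lra.
Qed.

Lemma descent {R : realType} {n : nat} (f : 'rV[R]_n -> R) (L : R) (x y : 'rV[R]_n) :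
  (forall y, differentiable f y) -> 0 <= L -> lipschitz_grad f L ->
  `| f y - f x - dotp (grad f x) (y - x) | <= L / 2 * dotp (y - x) (y - x).
Proof.
move=> df L0 Lip.
set v := y - x.
have key : forall t : R, 0 < t < 1 ->
    `| dotp (grad f (t *: v + x)) v - dotp (grad f x) v | <= 2 * (L / 2 * dotp v v) * t.
  move=> t /andP[t0 t1].
  rewrite -dotpBl.
  have E : forall w : 'rV[R]_n, `|dotp w v| <= enorm w * enorm v.
    move=> w; rewrite ler_norml cauchy_schwarz andbT.
    rewrite lerNl -dotpNl; apply: (le_trans (cauchy_schwarz _ _)).
    by rewrite -scaleN1r enormZ normrN normr1 mul1r.
  apply: (le_trans (E _)).
  apply: (@le_trans _ _ (L * enorm (t *: v + x - x) * enorm v)).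
    by apply: ler_wpM2r; [exact: enorm_ge0 | exact: Lip].
  rewrite addrK enormZ (ger0_norm (ltW t0)) -enorm_sqr.
  by rewrite le_eqVlt; apply/orP; left; apply/eqP; field.
have hphi := fun t : R => phi_derive f x v t df.
have up := descent_aux _ _ (dotp (grad f x) v) (L / 2 * dotp v v) hphi
   (fun t Ht => le_trans (ler_norm _) (key t Ht)).
have hphiN : forall t : R, is_derive t (1:R) (- (fun s : R => f (s *: v + x)))
     (- dotp (grad f (t *: v + x)) v) by move=> t; exact: is_deriveN.
have nb : forall a b : R, -a - -b <= `|a - b|.
  by move=> a b; have := ler_norm (- (a - b)); rewrite normrN; lra.
have lo := descent_aux _ _ (- dotp (grad f x) v) (L / 2 * dotp v v) hphiN
   (fun t Ht => le_trans (nb _ _) (key t Ht)).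
move: up lo; rewrite /= scale1r scale0r add0r /v subrK => up lo.
rewrite ler_norml up andbT. move: lo. rewrite !fctE scale1r scale0r add0r subrK. lra.
Qed.

Lemma subseq_cvgn {T : topologicalType} (u : nat -> T) (l : T) (s : nat -> nat) :
  {homo s : a b / (a < b)%N} -> u @ \oo --> l -> (u \o s) @ \oo --> l.
Proof.
move=> hs hu.
have sk : forall k, (k <= s k)%N.
  elim=> [|k IH] //; apply: leq_ltn_trans IH (hs _ _ _); exact: ltnSn.
apply: cvg_comp hu.
apply/cvgnyPge => A; exists A => // k /= Hk; exact: leq_trans Hk (sk k).
Qed.

Lemma dotp_cvg0 {R : realType} {n : nat} (u : nat -> 'rV[R]_n) :
  (fun k => dotp (u k) (u k)) @ \oo --> (0:R) -> u @ \oo --> (0 : 'rV[R]_n).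
Proof.
move=> hQ; apply/cvgr0Pnorm_lt => e e0.
have e20 : 0 < e ^+ 2 by rewrite exprn_gt0.
have := cvgr0_norm_lt _ hQ _ e20.
move=> H; near=> k.
have Hk : `|dotp (u k) (u k)| < e ^+ 2 by near: k; exact: H.
have h1 := norm_le_dotp (u k).
have h2 : dotp (u k) (u k) < e ^+ 2.
  by apply: le_lt_trans Hk; exact: ler_norm.
have h3 : 0 <= `|u k| by [].
move: (lt_le_trans (le_lt_trans h1 h2) (lexx _)) => h4.
rewrite -(@ltr_pXn2r _ 2) // ?nnegrE //; exact: ltW.
Unshelve. all: by end_near.
Qed.

Lemma cvg_dotp0 {R : realType} {n : nat} (u : nat -> 'rV[R]_n) :
  u @ \oo --> (0 : 'rV[R]_n) -> (fun k => dotp (u k) (u k)) @ \oo --> (0:R).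
Proof.
move=> hu.
have hn : (fun k => `|u k|) @ \oo --> (0:R).
  have H := cvg_norm hu; rewrite normr0 in H; exact: (H _).
have hn2 : (fun k => n%:R * (`|u k| * `|u k|)) @ \oo --> (0:R).
  have H := cvgMl_tmp (a := n%:R) (cvgM hn hn).
  rewrite mulr0 mulr0 in H; exact: (H _).
apply: (squeeze_cvgr _ (cvg_cst 0) hn2).
near=> k; rewrite dotp_ge0 /= -expr2; exact: dotp_le_norm.
Unshelve. all: by end_near.
Qed.

Lemma cvg_rV_dotp {R : realType} {n : nat} (u : nat -> 'rV[R]_n) (a : 'rV[R]_n) :
  u @ \oo --> a <-> (fun k => dotp (u k - a) (u k - a)) @ \oo --> (0:R).
Proof.
split.
  move=> hu; apply: (cvg_dotp0 (fun k => u k - a)).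
  by apply/subr_cvg0.
move=> hQ; apply/subr_cvg0; exact: (dotp_cvg0 (fun k => u k - a)).
Qed.
Definition inner {R : realType} {n : nat} (f : 'rV[R]_n -> R) (g : 'rV[R]_n -> \bar R)
  (gam : R) (x u : 'rV[R]_n) : \bar R :=
  ((f x + dotp (grad f x) (u - x))%R%:E + g u
    + (1 / (2 * gam) * dotp (u - x) (u - x))%R%:E)%E.

Lemma inner_prox {R : realType} {n : nat} (f : 'rV[R]_n -> R) (g : 'rV[R]_n -> \bar R)
  (gam : R) (x u : 'rV[R]_n) : gam != 0 ->
  inner f g gam x u =
  (g u + (1 / (2 * gam) * dotp (u - (x - gam *: grad f x)) (u - (x - gam *: grad f x)))%R%:E
   + (f x - gam / 2 * dotp (grad f x) (grad f x))%R%:E)%E.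
Proof.
move=> g0; rewrite /inner (addeC _ (g u)) -!addeA -!EFinD; congr (_ + _)%E; congr EFin.
have -> : u - (x - gam *: grad f x) = (u - x) + gam *: grad f x.
  by rewrite opprB addrA [_ - x + _]addrC addrA [_ + u]addrC.
move: (u - x) (grad f x) => d gr.
rewrite !(dotpDl, dotpDr, dotpZl, dotpZr) (dotpC d gr).
by field.
Qed.

Lemma fbe_eq {R : realType} {n : nat} (f : 'rV[R]_n -> R) (g : 'rV[R]_n -> \bar R)
  (gam : R) (x xb : 'rV[R]_n) : gam != 0 -> Tg f g gam x xb ->
  fbe f g gam x = inner f g gam x xb.
Proof.
move=> g0 hT; apply/eqP; rewrite eq_le; apply/andP; split.
  by apply: ereal_inf_lbound; exists xb.
apply/ereal_infP => _ [u _ <-].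
rewrite -/(inner f g gam x u) !inner_prox //.
apply: leeD2r; exact: hT.
Qed.

Lemma dotp_continuous {R : realType} {n : nat} (a : 'rV[R]_n) :
  {for a, continuous (fun v : 'rV[R]_n => dotp v v)}.
Proof.
have -> : (fun v : 'rV[R]_n => dotp v v) =
          \sum_(i < n) (fun v : 'rV[R]_n => v 0 i * v 0 i).
  by apply: funext => v; rewrite fct_sumE.
apply: differentiable_continuous; apply: differentiable_sum => i.
have -> : (fun v : 'rV[R]_n => v 0 i * v 0 i) =
   (fun v : 'rV[R]_n => v 0 i) * (fun v : 'rV[R]_n => v 0 i) by [].
by apply: differentiableM; exact: differentiable_coord.
Qed.

Lemma cvg_dotp_seq {R : realType} {n : nat} (u : nat -> 'rV[R]_n) (a : 'rV[R]_n) :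
  u @ \oo --> a -> (fun k => dotp (u k) (u k)) @ \oo --> dotp a a.
Proof. by move=> hu; apply: (continuous_cvg _ (dotp_continuous a) hu). Qed.

Lemma g_fin {R : realType} {n : nat} (f : 'rV[R]_n -> R) (g : 'rV[R]_n -> \bar R)
  (gam : R) (x xb : 'rV[R]_n) : proper_fun g -> Tg f g gam x xb -> g xb \is a fin_num.
Proof.
move=> [gNy [x1 hx1]] hT.
rewrite fin_numE gNy /=; apply/eqP => E.
have := hT x1; rewrite E /= addye //.
by rewrite -(fineK hx1) -EFinD leye_eq.
Qed.

Lemma fbe_lb {R : realType} {n : nat} (f : 'rV[R]_n -> R) (g : 'rV[R]_n -> \bar R)
  (gam L : R) (xs x : 'rV[R]_n) : (forall y, differentiable f y) -> 0 <= L ->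
  lipschitz_grad f L -> L / 2 <= 1 / (2 * gam) ->
  (forall y, (phi f g xs <= phi f g y)%E) -> (phi f g xs <= fbe f g gam x)%E.
Proof.
move=> df L0 Lip cL hxs.
apply/ereal_infP => _ [u _ <-].
apply: (le_trans (hxs u)).
rewrite /phi -addeA (addeC (g u)) addeA -EFinD leeD2r // lee_fin.
have := descent f L x u df L0 Lip.
have := dotp_ge0 (u - x).
move: (dotp (u - x) (u - x)) => q q0 /ler_normlP [_ H].
have : L / 2 * q <= 1 / (2 * gam) * q by apply: ler_wpM2r.
lra.
Qed.
Theorem proposition5p2 (R : realType) (n : nat)
  (f : 'rV[R]_n -> R) (g : 'rV[R]_n -> \bar R)
  (Lf : R) (gg : \bar R) (rho : R)
  (gam sigma beta mu : R)
  (x xb rb d s : nat -> 'rV[R]_n) (Q P : nat -> 'M[R]_n) (tau : nat -> R) :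
  (forall y, differentiable f y) -> 0 < Lf -> lipschitz_grad f Lf ->
  proper_fun g -> lower_semicontinuous g -> (0 < gg)%E -> prox_bounded g gg ->
  0 <= rho -> weakly_convex g rho ->
  (exists xs, forall y, (phi f g xs <= phi f g y)%E) ->
  0 < gam -> gam < 1 / Lf -> (gam%:E < gg)%E ->
  0 < sigma -> sigma < gam * (1 - gam * Lf) / 2 ->
  0 < beta < 1 -> 0 < mu < 1 ->
  pgcl_run f g gam sigma beta mu x xb rb d s Q P tau ->
  let r : nat -> 'rV[R]_n := fun k => gam^-1 *: (x k - xb k) in
  (* (i) *)
  (r @ \oo --> (0 : 'rV[R]_n)
   /\ cvgn (series (fun k => dotp (r k) (r k)))
   /\ limpts x = limpts xb /\ limpts x `<=` fixT f g gam)
  /\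
  (* (ii) *)
  (exists phistar : R,
     (fun k => fbe f g gam (x k)) @ \oo --> phistar%:E /\
     ((exists Mb : R, forall k, enorm (x k) <= Mb) ->
        (fun k => phi f g (xb k)) @ \oo --> phistar%:E)).
Proof.
move=> df L0 Lip prop lsc gg0 pb rho0 wc [xs hxs] g0 gL ggam s0 sL
  /andP[b0 b1] /andP[m0 m1] run r.
have gne : gam != 0 by rewrite gt_eqF.
have gL1 : gam * Lf < 1 by move: gL; rewrite ltr_pdivlMr // mul1r.
have cL : Lf / 2 <= 1 / (2 * gam).
  rewrite ler_pdivlMr ?mulr_gt0 //.
  have -> : Lf / 2 * (2 * gam) = gam * Lf by field.
  exact: ltW.
set c := 1 / (2 * gam).
have hT : forall k, Tg f g gam (x k) (xb k) by move=> k; case: (run k).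
have gfin : forall k, g (xb k) \is a fin_num by move=> k; exact: (g_fin _ _ _ _ _ prop (hT k)).
pose F k := f (x k) + dotp (grad f (x k)) (xb k - x k) + fine (g (xb k))
   + c * dotp (xb k - x k) (xb k - x k).
have hF : forall k, fbe f g gam (x k) = (F k)%:E.
  move=> k; rewrite (fbe_eq _ _ _ _ _ gne (hT k)) /inner -(fineK (gfin k)) -!EFinD //.
have hx1 : forall k, x k.+1 = xb k + tau k ^+ 2 *: d k + tau k *: s k.
  move=> k; have := run k; cbv zeta.
  by move=> [_ [_ [_ [_ [_ [_ [hneg [hzero [[m [ht [hls _]]] hx1]]]]]]]]].
have hdec : forall k, F k.+1 <= F k - sigma * dotp (r k) (r k).
  move=> k; have := run k; cbv zeta.
  move=> [_ [_ [_ [_ [_ [_ [hneg [hzero [[m [ht [hls _]]] _]]]]]]]]].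
  have key : forall (B : 'M[R]_n), (lambda_min_neg B -> dotp (mxapp B (s k)) (s k) < 0) ->
     (~ lambda_min_neg B -> dotp (mxapp B (s k)) (s k) = 0) -> dotp (mxapp B (s k)) (s k) <= 0.
    move=> B h1 h2; case: (pselect (lambda_min_neg B)) => h.
      exact: ltW (h1 h).
    by rewrite (h2 h).
  have q0 := key _ hneg hzero.
  move: q0 hls; move: (dotp (mxapp _ (s k)) (s k)) => q q0.
  rewrite -hx1 !hF -EFinB -EFinD lee_fin => hls.
  have : 0 <= mu / 2 * tau k ^+ 2.
    apply: mulr_ge0; [apply: divr_ge0; lra | exact: sqr_ge0].
  move=> h; have := mulr_ge0_le0 h q0.
  rewrite /r /=; lra.
have hlb0 : forall k, (phi f g xs <= (F k)%:E)%E.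
  by move=> k; rewrite -hF; apply: (fbe_lb _ _ _ _ _ _ df (ltW L0) Lip cL hxs).
have gxsfin : g xs \is a fin_num.
  rewrite fin_numE; apply/andP; split; first exact: prop.1.
  apply/eqP => E; have := hlb0 0%N; rewrite /phi E addey //.
have pfin : phi f g xs \is a fin_num by rewrite /phi fin_numD gxsfin.
set m := fine (phi f g xs).
have hlb : forall k, m <= F k by move=> k; rewrite -lee_fin /m fineK.
have hS : forall N, sigma * (\sum_(0 <= k < N) dotp (r k) (r k)) <= F 0%N - F N.
  elim=> [|N IH]; first by rewrite big_geq // mulr0 subrr.
  rewrite big_nat_recr //= mulrDr; have := hdec N; lra.
have hser : cvgn (series (fun k => dotp (r k) (r k))).
  apply: nondecreasing_is_cvgn.
    by apply: nondecreasing_series => k _ _; exact: dotp_ge0.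
  exists ((F 0%N - m) / sigma) => _ [N _ <-].
  rewrite /series /= ler_pdivlMr //; have := hS N; have := hlb N; lra.
have hQr : (fun k => dotp (r k) (r k)) @ \oo --> (0:R) := cvg_series_cvg_0 hser.
have hr : r @ \oo --> (0 : 'rV[R]_n) := dotp_cvg0 r hQr.
have hQe : forall k, dotp (x k - xb k) (x k - xb k) = gam ^+ 2 * dotp (r k) (r k).
  by move=> k; rewrite /r !(dotpZl, dotpZr); field.
have hQe0 : (fun k => dotp (x k - xb k) (x k - xb k)) @ \oo --> (0:R).
  have H := cvgMl_tmp (a := gam ^+ 2) hQr; rewrite mulr0 in H.
  have -> : (fun k => dotp (x k - xb k) (x k - xb k)) =
     (fun k => gam ^+ 2 * dotp (r k) (r k)) by apply: funext => k; exact: hQe.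
  exact: (H _).
have he : (fun k => x k - xb k) @ \oo --> (0 : 'rV[R]_n) := dotp_cvg0 _ hQe0.
have Fnoninc : {homo F : a b / (a <= b)%N >-> b <= a}.
  move=> a b /subnK <-; elim: (b - a)%N => [|j IH] /=; first by rewrite add0n.
  rewrite addSn; have := hdec (j + a)%N; have := dotp_ge0 (r (j + a)%N).
  move=> q0; have := mulr_ge0 (ltW s0) q0; lra.
have Flb : has_lbound (range F).
  by exists m => _ [k _ <-]; exact: hlb.
have hFcvg : F @ \oo --> inf (range F) := nonincreasing_cvgn Fnoninc Flb.
split; last first.
  exists (inf (range F)); split.
    under eq_cvg do rewrite hF.
    apply: cvg_EFin; [by near=> k | exact: hFcvg].
  move=> _.
  pose G k := f (xb k) + fine (g (xb k)).
  have hG : forall k, phi f g (xb k) = (G k)%:E.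
    by move=> k; rewrite /phi -(fineK (gfin k)) -EFinD /G.
  have c0 : 0 <= c by rewrite /c divr_ge0 // mulr_ge0 // ltW.
  have hbound : forall k, `|G k - F k| <= (Lf / 2 + c) * dotp (x k - xb k) (x k - xb k).
    move=> k.
    have E : dotp (xb k - x k) (xb k - x k) = dotp (x k - xb k) (x k - xb k).
      by rewrite -opprB dotpNl dotpNr opprK.
    have := descent f Lf (x k) (xb k) df (ltW L0) Lip; rewrite E.
    have := dotp_ge0 (x k - xb k).
    move=> q0 /ler_normlP [h1 h2]; have := mulr_ge0 c0 q0.
    rewrite /G /F E; move: (dotp (x k - xb k) (x k - xb k)) q0 h1 h2 => q q0 h1 h2 h3.
    rewrite ler_norml; apply/andP; split; lra.
  have hh : (fun k => (Lf / 2 + c) * dotp (x k - xb k) (x k - xb k)) @ \oo --> (0:R).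
    have H := cvgMl_tmp (a := Lf / 2 + c) hQe0; rewrite mulr0 in H; exact: (H _).
  have hGcvg : G @ \oo --> inf (range F).
    have H1 := cvgB hFcvg hh; have H2 := cvgD hFcvg hh; rewrite subr0 in H1; rewrite addr0 in H2.
    apply: (squeeze_cvgr _ (H1 _) (H2 _)).
    near=> k; have := hbound k; move/ler_normlP => [h1 h2]; apply/andP; split; rewrite !fctE; lra.
  under eq_cvg do rewrite hG.
  apply: cvg_EFin; [by near=> k | exact: hGcvg].
have x2xb : forall (s' : nat -> nat) (p : 'rV[R]_n), {homo s' : a b / (a < b)%N} ->
    (x \o s') @ \oo --> p -> (xb \o s') @ \oo --> p.
  move=> s' p hs hx.
  have he' := subseq_cvgn _ _ _ hs he.
  have E : forall k, (xb \o s') k = ((x \o s') - ((fun k => x k - xb k) \o s')) k.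
    by move=> k; rewrite !fctE /= opprB addrC subrK.
  have H := cvgB hx he'; rewrite subr0 in H.
  rewrite (eq_cvg _ _ E); exact: (H _).
have xb2x : forall (s' : nat -> nat) (p : 'rV[R]_n), {homo s' : a b / (a < b)%N} ->
    (xb \o s') @ \oo --> p -> (x \o s') @ \oo --> p.
  move=> s' p hs hx.
  have he' := subseq_cvgn _ _ _ hs he.
  have E : forall k, (x \o s') k = ((xb \o s') + ((fun k => x k - xb k) \o s')) k.
    by move=> k; rewrite !fctE /= addrC subrK.
  have H := cvgD hx he'; rewrite addr0 in H.
  rewrite (eq_cvg _ _ E); exact: (H _).
split; first exact: hr.
split; first exact: hser.
split.
  apply/seteqP; split => p; rewrite /limpts /= => -[s' [hs hx]]; exists s'; split => //.
    exact: x2xb.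
  exact: xb2x.
move=> p; rewrite /limpts /= => -[s' [hs hx]].
have hxb := x2xb s' p hs hx.
have hgr : (fun k => grad f (x (s' k))) @ \oo --> grad f p.
  apply/cvg_rV_dotp.
  have hxp : (fun k => dotp (x (s' k) - p) (x (s' k) - p)) @ \oo --> (0:R).
    by move/cvg_rV_dotp: hx.
  have H := cvgMl_tmp (a := Lf ^+ 2) hxp; rewrite mulr0 in H.
  apply: (squeeze_cvgr _ (cvg_cst 0) (H _)).
  near=> k; rewrite dotp_ge0 /=.
  have h := Lip (x (s' k)) p; have h0 := enorm_ge0 (grad f (x (s' k)) - grad f p).
  have h1 := enorm_ge0 (x (s' k) - p).
  rewrite -!enorm_sqr; nra.
set w := p - gam *: grad f p.
pose wk k := x (s' k) - gam *: grad f (x (s' k)).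
have hw : wk @ \oo --> w.
  have H := cvgZl_tmp (k := gam) hgr.
  have H2 := cvgB hx (H _); exact: (H2 _).
rewrite /fixT /Tg /prox /= -/c -/w => u.
case gu: (g u) => [G | |]; last first.
- by have := prop.1 u; rewrite gu.
- by rewrite addye // leey.
pose ak k := G + c * dotp (u - wk k) (u - wk k) - c * dotp (xb (s' k) - wk k) (xb (s' k) - wk k).
set a := G + c * dotp (u - w) (u - w) - c * dotp (p - w) (p - w).
have ha : ak @ \oo --> a.
  have h1 : (fun k => u - wk k) @ \oo --> u - w.
    have H := cvgB (cvg_cst u) hw; exact: (H _).
  have h2 : (fun k => xb (s' k) - wk k) @ \oo --> p - w.
    have H := cvgB hxb hw; exact: (H _).
  have q1 := cvg_dotp_seq _ _ h1; have q2 := cvg_dotp_seq _ _ h2.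
  have c1 := cvgMl_tmp (a := c) q1; have c2 := cvgMl_tmp (a := c) q2.
  have H := cvgB (cvgD (cvg_cst G) (c1 _)) (c2 _); exact: (H _).
have hle : forall k, (g (xb (s' k)) <= (ak k)%:E)%E.
  move=> k; have := hT (s' k) u; rewrite gu -/c -(fineK (gfin (s' k))) -!EFinD lee_fin.
  rewrite lee_fin /ak /wk; lra.
suff hgp : (g p <= a%:E)%E.
  apply: (le_trans (leeD2r _ hgp)); rewrite -EFinD lee_fin /a; lra.
rewrite leNgt; apply/negP => hlt.
have [b [hab hbp]] : exists b : R, a < b /\ (b%:E < g p)%E.
  move: hlt; case: (g p) => [P0 | |] hlt.
  - exists ((a + P0) / 2); move: hlt; rewrite lte_fin => hlt.
    split; [lra | rewrite lte_fin; lra].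
  - by exists (a + 1); split; [lra | exact: ltry].
  - by [].
have [V hV hVg] := lsc p b hbp.
have ev1 : \forall k \near \oo, V (xb (s' k)) := hxb V hV.
have ev2 : \forall k \near \oo, ak k < b.
  have := proj1 (cvgrPdist_lt ak a) ha (b - a); rewrite subr_gt0 => /(_ _ hab).
  apply: filterS => k hk; have := ler_norm (ak k - a); rewrite distrC; lra.
have [k [hk1 hk2]] := filter_ex (filterI ev1 ev2).
have := lt_le_trans (hVg _ hk1) (hle k); rewrite lte_fin; lra.
Unshelve. all: by end_near.
Qed.
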